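(* For $d>0$ let $\lambda_d(\rho)=\int_{\sinh^{-1}d}^{\rho}\frac{d}{\sqrt{\sinh^2x-d^2}}\,dx$ for $\rho\ge\sinh^{-1}d$, let $\hat\rho(d)=\frac{3}{2}\log d$, and let $\hat h(d)=\lambda_d(\hat\rho(d))$ (defined for $d$ large enough that $\hat\rho(d)\ge\sinh^{-1}d$). Then $\lim_{d\to\infty}\hat h(d)=\frac{\pi}{2}$.
   Context: The function $\lambda_d$ is the generating function of the rotationally symmetric minimal catenoid $\mathcal{C}_d=\{(\rho,\theta,\pm\lambda_d(\rho))\}$ in $\mathbb{H}^2\times\mathbb{R}$ (coordinates: geodesic polar coordinates $(\rho,\theta)$ on $\mathbb{H}^2$ and height $z$), so $2\hat h(d)$ is the height of the compact piece $\mathcal{C}_d\cap(\mathbb{H}^2\times[-\hat h(d),\hat h(d)])$. *)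

(* Defs.v *)
From HB Require Import structures.
From mathcomp Require Import all_boot all_order all_algebra.
From mathcomp Require Import all_classical all_reals all_analysis.
Set Implicit Arguments. Unset Strict Implicit. Unset Printing Implicit Defensive.
Import Order.TTheory GRing.Theory Num.Theory.
Import numFieldNormedType.Exports.
Local Open Scope classical_set_scope.
Local Open Scope ring_scope.

Definition sinh {R : realType} (x : R) : R := (expR x - expR (- x)) / 2.
Definition asinh {R : realType} (x : R) : R := ln (x + Num.sqrt (x ^+ 2 + 1)).

(* lambda_d(rho) = int_{asinh d}^{rho} d / sqrt(sinh^2 x - d^2) dx,
   as a (Lebesgue, hence absolutely convergent improper) integral of a
   nonnegative function, valued in the extended reals. *)
Definition lambda_ {R : realType} (d rho : R) : \bar R :=
  (\int[@lebesgue_measure R]_(x in `]asinh d, rho])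
     (d / Num.sqrt (sinh x ^+ 2 - d ^+ 2))%:E)%E.

Definition rho_hat {R : realType} (d : R) : R := 3 / 2 * ln d.

Definition h_hat {R : realType} (d : R) : \bar R := lambda_ d (rho_hat d).

(* Main.v *)
Require Import Defs.
From HB Require Import structures.
From mathcomp Require Import all_boot all_order all_algebra.
From mathcomp Require Import all_classical all_reals all_analysis.
From mathcomp Require Import ring lra measurable_realfun.
Import Order.TTheory GRing.Theory Num.Theory.
Import numFieldNormedType.Exports.
Local Open Scope classical_set_scope.
Local Open Scope ring_scope.

Section S.
Variable R : realType.
Definition cosh (x : R) : R := (expR x + expR (- x)) / 2.

Lemma is_derive_expN (x : R) : is_derive x 1 (fun y => expR (- y)) (- expR (- x)).
Proof.
have := @is_derive1_comp R expR (fun y => - y) x (expR (-x)) (-1) _ _.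
by rewrite mulrN1; apply.
Qed.

Lemma is_derive_sinh (x : R) : is_derive x 1 (@sinh R) (cosh x).
Proof.
rewrite /sinh /cosh.
have H := is_deriveB (is_derive_expR x) (is_derive_expN x).
have H2 := is_deriveM H (@is_derive_cst _ _ _ (2^-1 : R) x 1).
have -> : (fun x0 : R => (expR x0 - expR (- x0)) / 2) = ((expR - (fun y => expR (- y))) * cst (2^-1 : R)).
  by apply/funext => y.
apply: (is_derive_eq H2).
rewrite /cst /= scaler0 add0r /GRing.scale /=. lra.
Qed.

Lemma sinh_asinh (d : R) : sinh (asinh d) = d.
Proof.
rewrite /sinh /asinh.
set s := Num.sqrt (d ^+ 2 + 1).
have s0 : 0 <= s by exact: sqrtr_ge0.
have ss : s ^+ 2 = d ^+ 2 + 1 by rewrite sqr_sqrtr // addr_ge0 // sqr_ge0.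
have y0 : 0 < d + s by nra.
rewrite expRN lnK ?posrE //.
have ne : d + s != 0 by rewrite gt_eqF.
apply/eqP; rewrite -subr_eq0.
have -> : (d + s - (d + s)^-1) / 2 - d = ((d+s)^+2 - 1 - 2*d*(d+s)) / (2*(d+s)).
  by field.
have -> : (d+s)^+2 - 1 - 2*d*(d+s) = 0 by rewrite sqrrD ss; ring.
by rewrite mul0r.
Qed.

Lemma sinh_lt (x y : R) : x < y -> sinh x < sinh y.
Proof.
move=> xy; rewrite /sinh.
have h1 : expR x < expR y by rewrite ltr_expR.
have h2 : expR (- y) < expR (- x) by rewrite ltr_expR ltrN2.
lra.
Qed.

Lemma sinh_ltE (x y : R) : (sinh x < sinh y) = (x < y).
Proof.
apply/idP/idP; last exact: sinh_lt.
move=> h; case: (leP y x) => // yx.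
move: yx; rewrite le_eqVlt => /predU1P[E|/sinh_lt]; first by move: h; rewrite E ltxx.
by move=> /(lt_trans h); rewrite ltxx.
Qed.

Lemma cosh_sq (x : R) : cosh x ^+ 2 = 1 + sinh x ^+ 2.
Proof.
rewrite /cosh /sinh expRN.
have e0 : expR x != 0 by rewrite gt_eqF // expR_gt0.
by field.
Qed.

Lemma cosh_gt0 (x : R) : 0 < cosh x.
Proof. by rewrite /cosh divr_gt0 // addr_gt0 // expR_gt0. Qed.

Definition GG (d x : R) : R := atan (Num.sqrt (sinh x ^+ 2 - d ^+ 2) / d).
Definition gg (d x : R) : R := d * cosh x / (sinh x * Num.sqrt (sinh x ^+ 2 - d ^+ 2)).

Lemma is_derive_GG (d x : R) : 0 < d -> d < sinh x -> is_derive x 1 (GG d) (gg d x).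
Proof.
move=> d0 dx.
set s := sinh x.
have s0 : 0 < s := lt_trans d0 dx.
have dx' : d < s := dx.
have v0 : 0 < s ^+ 2 - d ^+ 2 by rewrite subr_gt0 ltrXn2r // ltW.

have H1 : is_derive x 1 (fun y => sinh y ^+ 2 - d ^+ 2) (2 * s * cosh x).
  have := is_deriveB (is_deriveX 2 (is_derive_sinh x)) (@is_derive_cst _ _ _ (d ^+ 2) x 1).
  move=> H; apply: (is_derive_eq H).
  by rewrite /GRing.scale /= subr0 expr1.
have H2 := @is_derive1_comp _ Num.sqrt (fun y => sinh y ^+ 2 - d ^+ 2) x _ _ (is_derive1_sqrt v0) H1.
have H3 := is_deriveM H2 (@is_derive_cst _ _ _ (d^-1) x 1).
set u := (fun y => Num.sqrt (sinh y ^+ 2 - d ^+ 2) / d).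
have Ha : is_derive (u x) 1 atan ((1 + u x ^+ 2)^-1).
  have := derivableP (@derivable_atan _ (u x)).
  by rewrite -derive1E derive1_atan.
have H4 := is_derive1_comp Ha H3.
apply: (is_derive_eq H4).
rewrite /gg /u -/s /cst /= scaler0 add0r /GRing.scale /=.
set q := Num.sqrt (s ^+ 2 - d ^+ 2).
have qq : q ^+ 2 = s ^+ 2 - d ^+ 2 by rewrite sqr_sqrtr // ltW.
have q0 : 0 < q by rewrite sqrtr_gt0.
have E : 1 + (q / d) ^+ 2 = s ^+ 2 / d ^+ 2.
  rewrite expr_div_n qq. field. by rewrite gt_eqF.
rewrite E.
have dn : d != 0 by rewrite gt_eqF.
have sn : s != 0 by rewrite gt_eqF.
have qn : q != 0 by rewrite gt_eqF.
field.
by rewrite dn sn qn.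
Qed.

Definition ff (d x : R) : R := d / Num.sqrt (sinh x ^+ 2 - d ^+ 2).

Lemma cont_of_derive {h : R -> R} {x dh : R} : is_derive x 1 h dh -> {for x, continuous h}.
Proof.
move=> H; apply: differentiable_continuous; apply/derivable1_diffP.
by case: H.
Qed.

Lemma is_derive_cosh (x : R) : is_derive x 1 cosh (sinh x).
Proof.
rewrite /sinh /cosh.
have H := is_deriveD (is_derive_expR x) (is_derive_expN x).
have H2 := is_deriveM H (@is_derive_cst _ _ _ (2^-1 : R) x 1).
have -> : (fun x0 : R => (expR x0 + expR (- x0)) / 2) = ((expR + (fun y => expR (- y))) * cst (2^-1 : R)).
  by apply/funext => y.
apply: (is_derive_eq H2).
rewrite /cst /= scaler0 add0r /GRing.scale /=. lra.
Qed.

Lemma is_derive_sqv (d x : R) : 0 < d -> d < sinh x ->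
  is_derive x 1 (fun y => Num.sqrt (sinh y ^+ 2 - d ^+ 2))
   ((2 * Num.sqrt (sinh x ^+ 2 - d ^+ 2))^-1 * (2 * sinh x * cosh x)).
Proof.
move=> d0 dx.
have s0 : 0 < sinh x := lt_trans d0 dx.
have v0 : 0 < sinh x ^+ 2 - d ^+ 2 by rewrite subr_gt0 ltrXn2r // ltW.
have H1 : is_derive x 1 (fun y => sinh y ^+ 2 - d ^+ 2) (2 * sinh x * cosh x).
  have := is_deriveB (is_deriveX 2 (is_derive_sinh x)) (@is_derive_cst _ _ _ (d ^+ 2) x 1).
  move=> H; apply: (is_derive_eq H).
  by rewrite /GRing.scale /= subr0 expr1.
exact: (@is_derive1_comp _ Num.sqrt (fun y => sinh y ^+ 2 - d ^+ 2) x _ _ (is_derive1_sqrt v0) H1).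
Qed.

Lemma sqv_gt0 (d x : R) : 0 < d -> d < sinh x -> 0 < Num.sqrt (sinh x ^+ 2 - d ^+ 2).
Proof.
move=> d0 dx.
have s0 : 0 < sinh x := lt_trans d0 dx.
by rewrite sqrtr_gt0 subr_gt0 ltrXn2r // ltW.
Qed.

Lemma cont_ff (d x : R) : 0 < d -> d < sinh x -> {for x, continuous (ff d)}.
Proof.
move=> d0 dx.
have c1 := cont_of_derive (is_derive_sqv d x d0 dx).
have c2 := continuousV (s := fun y => Num.sqrt (sinh y ^+ 2 - d ^+ 2)) (x := x) (negbT (gt_eqF (sqv_gt0 d x d0 dx))) c1.
have c3 := continuousM (@cst_continuous _ _ d x) c2.
exact: c3.
Qed.

Lemma cont_gg (d x : R) : 0 < d -> d < sinh x -> {for x, continuous (gg d)}.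
Proof.
move=> d0 dx.
have s0 : 0 < sinh x := lt_trans d0 dx.
have c1 := cont_of_derive (is_derive_sqv d x d0 dx).
have c0 := cont_of_derive (is_derive_sinh x).
have c4 := continuousM c0 c1.
have c2 := continuousV (s := fun y => sinh y * Num.sqrt (sinh y ^+ 2 - d ^+ 2)) (x := x) (negbT (gt_eqF (mulr_gt0 s0 (sqv_gt0 d x d0 dx)))) c4.
have c5 := continuousM (@cst_continuous _ _ d x) (cont_of_derive (is_derive_cosh x)).
have c3 := continuousM c5 c2.
exact: c3.
Qed.

Lemma gg_ff (d x : R) : 0 < d -> d < sinh x -> gg d x = ff d x * (cosh x / sinh x).
Proof.
move=> d0 dx.
have s0 : 0 < sinh x := lt_trans d0 dx.
have q0 := sqv_gt0 d x d0 dx.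
rewrite /gg /ff; field.
by rewrite !gt_eqF.
Qed.

Lemma ff_ge0 (d x : R) : 0 < d -> 0 <= ff d x.
Proof. by move=> d0; rewrite /ff divr_ge0 // ?sqrtr_ge0 // ltW. Qed.

Lemma cs_ge1 (x : R) : 0 < sinh x -> 1 <= cosh x / sinh x.
Proof.
move=> s0; rewrite ler_pdivlMr // mul1r.
have := cosh_sq x; have := cosh_gt0 x; nra.
Qed.

Lemma cs_le (d x : R) : 0 < d -> d < sinh x -> cosh x / sinh x <= 1 + d ^-2.
Proof.
move=> d0 dx.
have s0 : 0 < sinh x := lt_trans d0 dx.
have c2 := cosh_sq x; have c0 := cosh_gt0 x.
set s := sinh x in s0 dx c2 *.
set t := s^-1.
have st : s * t = 1 by rewrite /t mulfV // gt_eqF.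
have t0 : 0 < t by rewrite /t invr_gt0.
have h0 : cosh x ^+ 2 <= (s + t) ^+ 2.
  rewrite c2 sqrrD st; have := sqr_ge0 t; lra.
have h1 : cosh x <= s + t by nra.
have h2 : t <= d^-1 by rewrite /t lef_pV2 ?posrE // ltW.
have e : d ^-2 = d^-1 ^+ 2 by rewrite exprVn.
have h3 : t ^+ 2 <= d ^-2 by rewrite e; nra.
have h4 : cosh x * t <= (s + t) * t by nra.
lra.
Qed.

Lemma ff_le_gg (d x : R) : 0 < d -> d < sinh x -> ff d x <= gg d x.
Proof.
move=> d0 dx; have s0 : 0 < sinh x := lt_trans d0 dx.
rewrite gg_ff // ler_peMr ?ff_ge0 ?cs_ge1 //.
Qed.

Lemma gg_le_ff (d x : R) : 0 < d -> d < sinh x -> gg d x <= (1 + d ^-2) * ff d x.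
Proof.
move=> d0 dx.
rewrite gg_ff // mulrC ler_wpM2r ?ff_ge0 ?cs_le //.
Qed.

Local Notation mu := (@lebesgue_measure R).

Lemma FTC_gg (d x y : R) : 0 < d -> d < sinh x -> x < y ->
  (\int[mu]_(t in `[x, y]) (gg d t)%:E = (GG d y)%:E - (GG d x)%:E)%E.
Proof.
move=> d0 dx xy.
have dt t : x <= t -> d < sinh t.
  move=> xt; apply: (lt_le_trans dx).
  by move: xt; rewrite le_eqVlt => /predU1P[->//|/sinh_lt/ltW].
apply: continuous_FTC2 => //.
- apply: continuous_in_subspaceT => t; rewrite inE /= in_itv /= => /andP[xt _].
  exact: cont_gg d t d0 (dt t xt).
- split.
  + move=> t; rewrite in_itv /= => /andP[xt _].
    by case: (is_derive_GG d t d0 (dt t (ltW xt))).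
  + apply: cvg_at_right_filter.
    exact: cont_of_derive (is_derive_GG d x d0 dx).
  + apply: cvg_at_left_filter.
    exact: cont_of_derive (is_derive_GG d y d0 (dt y (ltW xy))).
- move=> t; rewrite in_itv /= => /andP[xt _].
  rewrite derive1E.
  by have [_ ->] := is_derive_GG d t d0 (dt t (ltW xt)).
Qed.

Lemma GG_ge0 (d x : R) : 0 < d -> 0 <= GG d x.
Proof.
by move=> d0; rewrite /GG -atan0 le_atan // divr_ge0 ?sqrtr_ge0 // ltW.
Qed.

Lemma GG_lt (d x : R) : GG d x < pi / 2.
Proof. exact: atan_ltpi2. Qed.

Lemma dA (d t : R) : asinh d < t -> d < sinh t.
Proof. by move=> /sinh_lt; rewrite sinh_asinh. Qed.

Lemma meas_ff (d : R) : 0 < d -> measurable_fun `]asinh d, +oo[ (EFin \o ff d).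
Proof.
move=> d0; apply/measurable_EFinP; apply: open_continuous_measurable_fun.
  exact: interval_open.
move=> t; rewrite inE /= in_itv /= andbT => At.
exact: cont_ff d t d0 (dA d t At).
Qed.

Lemma meas_gg (d : R) : 0 < d -> measurable_fun `]asinh d, +oo[ (EFin \o gg d).
Proof.
move=> d0; apply/measurable_EFinP; apply: open_continuous_measurable_fun.
  exact: interval_open.
move=> t; rewrite inE /= in_itv /= andbT => At.
exact: cont_gg d t d0 (dA d t At).
Qed.

Lemma int_ff_le (d x y : R) : 0 < d -> asinh d < x ->
  (\int[mu]_(t in `[x, y]) (ff d t)%:E <= (pi / 2)%:E)%E.
Proof.
move=> d0 Ax.
set z := Num.max y (x + 1).
have xz : x < z by rewrite /z lt_max; apply/orP; right; rewrite ltrDl.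
have sub : `[x, y] `<=` `]asinh d, +oo[.
  move=> t /=; rewrite !in_itv /= andbT => /andP[xt _]; exact: lt_le_trans Ax xt.
have sub2 : `[x, z] `<=` `]asinh d, +oo[.
  move=> t /=; rewrite !in_itv /= andbT => /andP[xt _]; exact: lt_le_trans Ax xt.
apply: (@le_trans _ _ (\int[mu]_(t in `[x, z]) (ff d t)%:E)%E).
  apply: ge0_subset_integral => //.
  - exact: (measurable_funS (measurable_itv _) sub2 (meas_ff d d0)).
  - by move=> t _; rewrite lee_fin ff_ge0.
  - move=> t /=; rewrite !in_itv /= => /andP[-> ty] /=.
    by rewrite /z le_max ty.
apply: (@le_trans _ _ (\int[mu]_(t in `[x, z]) (gg d t)%:E)%E).
  apply: ge0_le_integral => //.
  - by move=> t _; rewrite lee_fin ff_ge0.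
  - exact: (measurable_funS (measurable_itv _) sub2 (meas_ff d d0)).
  - exact: (measurable_funS (measurable_itv _) sub2 (meas_gg d d0)).
  - move=> t /= xt; rewrite lee_fin ff_le_gg //; apply: dA.
    by move: xt; rewrite in_itv /= => /andP[xt _]; exact: lt_le_trans Ax xt.
rewrite (FTC_gg d x z d0 (dA d x Ax) xz).
rewrite lee_fin.
have := GG_lt d z; have := GG_ge0 d x d0; lra.
Qed.

Lemma meas_kgg (d k : R) : 0 < d -> measurable_fun `]asinh d, +oo[ (fun t => (k * gg d t)%:E).
Proof.
move=> d0; apply/measurable_EFinP; apply: open_continuous_measurable_fun.
  exact: interval_open.
move=> t; rewrite inE /= in_itv /= andbT => At.
exact: continuousM (@cst_continuous _ _ k t) (cont_gg d t d0 (dA d t At)).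
Qed.

Lemma lambda_ge (d x rho : R) : 0 < d -> asinh d < x -> x < rho ->
  (((1 + d^-2)^-1 * (GG d rho - GG d x))%:E <= lambda_ d rho)%E.
Proof.
move=> d0 Ax xr.
set k := (1 + d^-2)^-1.
have k0 : 0 < k by rewrite /k invr_gt0 ltr_pwDl // invr_ge0 exprn_ge0 // ltW.
have sub : `[x, rho] `<=` `]asinh d, +oo[.
  move=> t /=; rewrite !in_itv /= andbT => /andP[xt _]; exact: lt_le_trans Ax xt.
have sub1 : `]asinh d, rho] `<=` `]asinh d, +oo[.
  by move=> t /=; rewrite !in_itv /= andbT => /andP[xt _].
have dt t : x <= t -> d < sinh t.
  by move=> xt; apply: dA; exact: lt_le_trans Ax xt.
rewrite /lambda_.
apply: (@le_trans _ _ (\int[mu]_(t in `[x, rho]) (ff d t)%:E)%E); last first.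
  apply: ge0_subset_integral => //.
  - exact: (measurable_funS (measurable_itv _) sub1 (meas_ff d d0)).
  - by move=> t _; rewrite lee_fin ff_ge0.
  - move=> t /=; rewrite !in_itv /= => /andP[xt ->]; rewrite andbT.
    exact: lt_le_trans Ax xt.
apply: (@le_trans _ _ (\int[mu]_(t in `[x, rho]) (k * gg d t)%:E)%E).
  under eq_integral do rewrite EFinM.
  rewrite ge0_integralZl_EFin //.
  - rewrite (FTC_gg d x rho d0 (dt x (lexx x)) xr) -EFinB -EFinM //.
  - move=> t /=; rewrite in_itv /= => /andP[xt _]; rewrite lee_fin.
    exact: (le_trans (ff_ge0 d t d0) (ff_le_gg d t d0 (dt t xt))).
  - exact: (measurable_funS (measurable_itv _) sub (meas_gg d d0)).
  - exact: ltW.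
apply: ge0_le_integral => //.
- move=> t /=; rewrite in_itv /= => /andP[xt _]; rewrite lee_fin; apply: mulr_ge0; first exact: ltW.
  exact: (le_trans (ff_ge0 d t d0) (ff_le_gg d t d0 (dt t xt))).
- exact: (measurable_funS (measurable_itv _) sub (meas_kgg d k d0)).
- exact: (measurable_funS (measurable_itv _) sub (meas_ff d d0)).
- move=> t /=; rewrite in_itv /= => /andP[xt _]; rewrite lee_fin.
  rewrite /k ler_pdivrMl; last by rewrite ltr_pwDl // invr_ge0 exprn_ge0 // ltW.
  exact: gg_le_ff d t d0 (dt t xt).
Qed.

Lemma lambda_le (d rho : R) : 0 < d -> (lambda_ d rho <= (pi / 2)%:E)%E.
Proof.
move=> d0.
set A := asinh d.
have mD : measurable (`]A, rho] : set R) by exact: measurable_itv.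
have sub1 : `]A, rho] `<=` `]asinh d, +oo[.
  by move=> t /=; rewrite !in_itv /= andbT => /andP[xt _].
pose B (n : nat) := [set` `[A + n.+1%:R^-1, rho]].
pose g' (n : nat) := (fun t => (ff d t)%:E) \_ (B n).
have mg' n : measurable_fun `]A, rho] (g' n).
  apply: (measurable_restrict (fun t => (ff d t)%:E) (measurable_itv _) mD).1.
  have s2 : ([set` `]A, rho]] `&` B n) `<=` `]asinh d, +oo[.
    by move=> t [At _]; exact: sub1.
  exact: (measurable_funS (measurable_itv _) s2 (meas_ff d d0)).
have g'0 n t : [set` `]A, rho]] t -> (0 <= g' n t)%E.
  move=> _; rewrite /g' /patch; case: ifP => _ //.
  by rewrite lee_fin ff_ge0.
have nd t : [set` `]A, rho]] t -> nondecreasing_seq (g'^~ t).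
  move=> _ m n mn; rewrite /g' /patch.
  case: ifPn => [tm|_]; last by case: ifP => _ //; rewrite lee_fin ff_ge0.
  rewrite ifT //.
  move: tm; rewrite !inE /B /= !in_itv /= => /andP[h ->]; rewrite andbT.
  apply: le_trans h; rewrite lerD2l lef_pV2 ?posrE ?ltr0Sn // ler_nat ltnS //.
have H := @cvg_monotone_convergence _ _ _ mu _ mD _ mg' g'0 nd.
have E : (\int[mu]_(x in `]A, rho]) limn (g'^~ x) = \int[mu]_(x in `]A, rho]) (ff d x)%:E)%E.
  apply: eq_integral => t; rewrite inE /= in_itv /= => /andP[At tr].
  have xA : 0 < t - A by rewrite subr_gt0.
  apply: lim_near_cst => //.
  near=> n.
  rewrite /g' /patch ifT // inE /B /= in_itv /= tr andbT.
  rewrite -lerBrDl; apply: ltW.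
  near: n; exact: (near_infty_natSinv_lt (PosNum xA)).
have -> : lambda_ d rho = (\int[mu]_(x in `]A, rho]) (ff d x)%:E)%E by [].
rewrite -E -(cvg_lim _ H) //.
apply: lime_le; first by apply/cvg_ex; eexists; exact: H.
apply: nearW => n.
rewrite /g' -integral_mkcondr.
apply: (le_trans _ (int_ff_le d (A + n.+1%:R^-1) rho d0 _)); last first.
  by rewrite /A ltrDl invr_gt0 ltr0Sn.
apply: ge0_subset_integral => //.
- by apply: measurableI; exact: measurable_itv.
- apply: (measurable_funS (measurable_itv _) _ (meas_ff d d0)).
  move=> t /=; rewrite !in_itv /= andbT => /andP[xt _].
  apply: lt_le_trans xt; by rewrite /A ltrDl invr_gt0 ltr0Sn.
- move=> t _; by rewrite lee_fin ff_ge0.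
Unshelve. all: by end_near.
Qed.

Lemma lim_k : (fun d : R => (1 + d ^-2)^-1) @ +oo --> (1 : R).
Proof.
have H2 : (fun d : R => d ^+ 2) @ +oo --> +oo.
  apply/cvgryPge => A.
  near=> d.
  have d1 : 1 <= d by near: d; apply: nbhs_pinfty_ge.
  have dA : A <= d by near: d; apply: nbhs_pinfty_ge; exact: num_real.
  nra.
have H0 : (fun d : R => d ^-2) @ +oo --> (0 : R).
  have P : \forall d \near +oo, 0 < (fun d : R => d ^+ 2) d.
    near=> d; apply: exprn_gt0; near: d; apply: nbhs_pinfty_gt; exact: num_real.
  have [_ h] := gtr0_cvgV0 P.
  exact: h H2.
have H1 : (fun d : R => 1 + d ^-2) @ +oo --> (1 + 0 : R).
  exact: cvgD (cvg_cst _) H0.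
rewrite addr0 in H1.
have H3 := cvgV (oner_neq0 R) H1.
rewrite invr1 in H3.
exact: H3.
Unshelve. all: by end_near.
Qed.

Lemma sinh_rho (d : R) : 0 < d ->
  exists e, [/\ 0 < e, e ^+ 2 = d & sinh (rho_hat d) = (d * e - (d * e)^-1) / 2].
Proof.
move=> d0.
exists (expR (ln d / 2)); split.
- exact: expR_gt0.
- by rewrite expr2 -expRD -splitr lnK ?posrE.
- rewrite /sinh expRN /rho_hat.
  have -> : 3 / 2 * ln d = ln d + ln d / 2 by field.
  by rewrite expRD lnK ?posrE.
Qed.

Lemma lim_a2 : (fun d : R => GG d (asinh (d + 1))) @ +oo --> (0 : R).
Proof.
have Hw : (fun d : R => Num.sqrt ((d + 1) ^+ 2 - d ^+ 2) / d) @ +oo --> (0 : R).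
  apply/cvgrPdist_le => eps eps0.
  near=> d.
  have d1 : 1 <= d by near: d; apply: nbhs_pinfty_ge.
  have d3 : 3 / eps ^+ 2 <= d by near: d; apply: nbhs_pinfty_ge; exact: num_real.
  have d0 : 0 < d by lra.
  rewrite sub0r normrN ger0_norm; last by rewrite divr_ge0 ?sqrtr_ge0 // ltW.
  rewrite ler_pdivrMr //.
  have ed0 : 0 <= eps * d by rewrite mulr_ge0 // ltW.
  rewrite -(ger0_norm ed0) -sqrtr_sqr ler_sqrt; last exact: sqr_ge0.
  have e20 : 0 < eps ^+ 2 by rewrite exprn_gt0.
  have : 3 <= eps ^+ 2 * d by rewrite -ler_pdivrMl.
  nra.
have := cvg_comp _ _ Hw (@continuous_atan R 0).
rewrite atan0 => H.
apply: cvg_trans H.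
apply: near_eq_cvg; near=> d.
by rewrite /GG /= sinh_asinh.
Unshelve. all: by end_near.
Qed.

Lemma S_bound (d : R) : 16 <= d -> exists p,
  [/\ p ^+ 2 = d ^+ 3, 4 * d <= p, p / 4 <= sinh (rho_hat d)
     & (p - 1) / 2 <= sinh (rho_hat d)].
Proof.
move=> d16.
have d0 : 0 < d by lra.
have [e [e0 e2 ->]] := sinh_rho d d0.
have e4 : 4 <= e by nra.
exists (d * e).
have p4 : 4 * d <= d * e by nra.
have p0 : 0 < d * e by nra.
set p := d * e in p4 p0 *.
have pq : p * p^-1 = 1 by rewrite mulfV // gt_eqF.
have q0 : 0 < p^-1 by rewrite invr_gt0.
have q1 : p^-1 <= 1 by nra.
split.
- by rewrite /p exprMn e2 -exprSr.
- exact: p4.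
- lra.
- lra.
Qed.

Lemma lim_a1 : (fun d : R => GG d (rho_hat d)) @ +oo --> pi / 2.
Proof.
have Hu : (fun d : R => Num.sqrt (sinh (rho_hat d) ^+ 2 - d ^+ 2) / d) @ +oo --> +oo.
  apply/cvgryPge => A.
  near=> d.
  have d16 : 16 <= d by near: d; apply: nbhs_pinfty_ge.
  have dA : 16 * (A ^+ 2 + 1) <= d by near: d; apply: nbhs_pinfty_ge; exact: num_real.
  have d0 : 0 < d by lra.
  have [p [p2 p4 hS _]] := S_bound d d16.
  set S := sinh (rho_hat d) in hS *.
  have S0 : 0 <= p / 4 by nra.
  have SS : (p / 4) ^+ 2 <= S ^+ 2 by rewrite ler_sqr // ?nnegrE; lra.
  have h1 : (p / 4) ^+ 2 = d ^+ 3 / 16 by rewrite expr_div_n p2; field.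
  have h2 : (A * d) ^+ 2 <= S ^+ 2 - d ^+ 2.
    have h3 : A ^+ 2 <= d / 16 - 1 by lra.
    have h4 : 0 <= d ^+ 2 by exact: sqr_ge0.
    rewrite exprMn.
    have : A ^+ 2 * d ^+ 2 <= (d / 16 - 1) * d ^+ 2 by rewrite ler_wpM2r.
    have -> : (d / 16 - 1) * d ^+ 2 = d ^+ 3 / 16 - d ^+ 2 by rewrite exprS; field.
    lra.
  rewrite ler_pdivlMr //.
  apply: (le_trans (ler_norm _)).
  rewrite -sqrtr_sqr ler_sqrt //.
  apply: le_trans h2; exact: sqr_ge0.
have := cvg_comp _ _ Hu (@cvgy_atan R).
by [].
Unshelve. all: by end_near.
Qed.

End S.
Theorem lemma7p2 (R : realType) :
  h_hat d @[d --> +oo%R] --> ((pi : R) / 2)%:E.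
Proof.
pose L (d : R) := (1 + d ^-2)^-1 * (GG R d (rho_hat d) - GG R d (asinh (d + 1))).
have HL : L @ +oo --> pi / 2.
  have H := cvgM (lim_k R) (cvgB (lim_a1 R) (lim_a2 R)).
  rewrite mul1r subr0 in H.
  exact: H.
apply: (@squeeze_cvge _ _ _ _ (fun d => (L d)%:E) _ (fun _ => (pi / 2)%:E)).
- near=> d.
  have d16 : 16 <= d by near: d; apply: nbhs_pinfty_ge.
  have d0 : 0 < d by lra.
  have [p [p2 p4 _ hS]] := S_bound R d d16.
  apply/andP; split.
  + apply: lambda_ge => //.
    * by rewrite -sinh_ltE !sinh_asinh; lra.
    * rewrite -sinh_ltE sinh_asinh; lra.
  + exact: lambda_le.
- apply: cvg_EFin; [exact: nearW | exact: HL].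
- exact: cvg_cst.
Unshelve. all: by end_near.
Qed.
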